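(* Let $0\to U\to M\to N\to 0$ be an exact sequence of graded $R$-modules (graded either in the multigraded or in the standard graded sense). If $U$ and $N$ have Stanley decompositions, then so does $M$, and $$\operatorname{Stdepth} M\ge \min(\operatorname{Stdepth} U,\operatorname{Stdepth} N).$$ Likewise, if $U$ and $N$ have Hilbert decompositions, then so does $M$, and $\operatorname{Hdepth} M\ge \min(\operatorname{Hdepth} U,\operatorname{Hdepth} N)$.
   Context: Let $K$ be a field and $R=K[X_1,\dots,X_n]$, considered either with the multigrading ($\mathbb{Z}^n$-grading with $\deg X_i=e_i$, the $i$-th unit vector) or with the standard grading ($\mathbb{Z}$-grading with $\deg X_i=1$). All modules are finitely generated graded $R$-modules. A graded retract of $R$ is a graded $K$-subalgebra $S\subseteq R$ for which there is a graded $K$-algebra epimorphism $\pi:R\to S$ with $\pi|_S=\mathrm{id}_S$ (in the multigraded case: subalgebras generated by a subset of the indeterminates; in the standard graded case: subalgebras generated by a set of linear forms). A Stanley decomposition of $M$ is a finite family $(S_i,x_i)_{i\in I}$ with $x_i\in M$ homogeneous, $S_i$ a graded retract of $R$, $S_i\cap\operatorname{Ann}(x_i)=0$, and $M=\bigoplus_{i\in I}S_ix_i$ as graded $K$-vector spaces. A Hilbert decomposition of $M$ is a finite family $(S_i,s_i)_{i\in I}$ with $s_i$ a degree ($s_i\in\mathbb{Z}^n$, resp. $\mathbb{Z}$), $S_i$ a graded retract of $R$, and $M\cong\bigoplus_{i\in I}S_i(-s_i)$ as graded $K$-vector spaces. The depth of such a decomposition is $\min_{i\in I}\dim S_i$ (the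 depth of the $R$-module $\bigoplus_i S_i$). $\operatorname{Stdepth}M$ (resp. $\operatorname{Hdepth}M$) is the maximal depth of a Stanley (resp. Hilbert) decomposition of $M$; by convention $\operatorname{Stdepth}0=\infty$ (and likewise for Hdepth). *)

(* Defs.v *)
From mathcomp Require Import all_boot all_algebra.
From mathcomp Require Import mpoly.
From Stdlib Require Import ClassicalEpsilon.

Set Implicit Arguments.
Unset Strict Implicit.
Unset Printing Implicit Defensive.

Import GRing.Theory.
Local Open Scope ring_scope.

(*  Multi : Z^n-grading, deg X_i = e_i (degrees are 'rV[int]_n)        *)
(*  Std   : Z-grading,   deg X_i = 1   (degrees are int)               *)
Inductive gkind := Multi | Std.

Definition degT (n : nat) (k : gkind) : zmodType :=
  match k with
  | Multi => ('rV[int]_n : zmodType)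
  | Std => (int : zmodType)
  end.

Definition mdegk (n : nat) (k : gkind) : 'X_{1..n} -> degT n k :=
  match k return 'X_{1..n} -> degT n k with
  | Multi => fun m => \row_j ((m j)%:Z)
  | Std => fun m => ((mdeg m)%:Z)
  end.

Section Graded.
Variables (K : fieldType) (n : nat) (k : gkind).
Local Notation R := {mpoly K[n]}.
Local Notation D := (degT n k).

(* p is a homogeneous element of R of degree e (0 is homogeneous of every degree) *)
Definition homR (e : D) (p : R) : Prop :=
  forall m, m \in msupp p -> mdegk k m = e.

(* A grading of the R-module M: hom d is the set of homogeneous elements   *)
(* of degree d, i.e. the graded piece M_d.  M = (+)_d M_d as K-spaces and  *)
(* X_i M_d \subseteq M_{d + deg X_i}.                                     *)
Record grading (M : lmodType R) := Grading {
  hom : D -> M -> Prop;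
  hom0 : forall d, hom d 0;
  homD : forall d x y, hom d x -> hom d y -> hom d (x + y);
  homZ : forall d (c : K) x, hom d x -> hom d (c%:MP *: x);
  homX : forall d (i : 'I_n) x, hom d x -> hom (d + mdegk k U_(i)) ('X_i *: x);
  hom_span : forall x : M, exists t (dg : 'I_t -> D) (y : 'I_t -> M),
      (forall j, hom (dg j) (y j)) /\ x = \sum_(j < t) y j;
  hom_direct : forall t (dg : 'I_t -> D) (y : 'I_t -> M),
      (forall a b, dg a = dg b -> a = b) ->
      (forall j, hom (dg j) (y j)) -> \sum_(j < t) y j = 0 -> forall j, y j = 0
}.

Definition fingen (M : lmodType R) : Prop :=
  exists t (gen : 'I_t -> M), forall x : M,
    exists a : 'I_t -> R, x = \sum_(j < t) a j *: gen j.

Definition graded_hom (M N : lmodType R) (GM : grading M) (GN : grading N)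
    (f : M -> N) : Prop :=
  (forall (a : R) (x y : M), f (a *: x + y) = a *: f x + f y) /\
  (forall d x, hom GM d x -> hom GN d (f x)).

(* Graded retracts of R.  A retract is described by a finite list ls   *)
(* of generators: in the multigraded case a list of indeterminates, in  *)
(* the standard graded case a list of linear forms.  The retract is the *)
(* K-subalgebra K[ls] generated by ls.                                  *)
Definition retract_gens (ls : seq R) : Prop :=
  match k with
  | Multi => forall l, l \in ls -> exists i : 'I_n, l = 'X_i
  | Std => forall l, l \in ls -> forall m, m \in msupp l -> mdeg m = 1%N
  end.

Definition inS (ls : seq R) (p : R) : Prop :=
  exists q : {mpoly K[size ls]}, p = q \mPo (in_tuple ls).

(* Krull dimension of K[ls] = dimension of the K-span of the linear forms ls *)
Definition rdim (ls : seq R) : nat :=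
  \rank (\matrix_(a < size ls, j < n) (nth 0 ls a)@_U_(j)).

End Graded.

Inductive enat := Fin of nat | Inf.

Definition ele (a b : enat) : bool :=
  match a, b with
  | _, Inf => true
  | Inf, Fin _ => false
  | Fin x, Fin y => (x <= y)%N
  end.

Definition emin (a b : enat) : enat :=
  match a, b with
  | Inf, b => b
  | a, Inf => a
  | Fin x, Fin y => Fin (minn x y)
  end.

Definition emin_fam t (v : 'I_t -> nat) : enat :=
  \big[emin/Inf]_(i < t) Fin (v i).

Definition emax_of (P : enat -> Prop) : enat :=
  epsilon (inhabits Inf) (fun v => P v /\ forall w, P w -> ele w v).

Section Decompositions.
Variables (K : fieldType) (n : nat) (k : gkind).
Local Notation R := {mpoly K[n]}.
Local Notation D := (degT n k).

Definition stanley_dec (M : lmodType R) (GM : grading k M)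
    t (L : 'I_t -> seq R) (x : 'I_t -> M) : Prop :=
  [/\ forall i, retract_gens k (L i),
      forall i, exists d, hom GM d (x i),
      forall i p, inS (L i) p -> p *: x i = 0 -> p = 0,
      forall y : M, exists p : 'I_t -> R,
        (forall i, inS (L i) (p i)) /\ y = \sum_(i < t) p i *: x i &
      forall p : 'I_t -> R, (forall i, inS (L i) (p i)) ->
        \sum_(i < t) p i *: x i = 0 -> forall i, p i *: x i = 0].

(* Hilbert decomposition (S_i, s_i)_{i < t}: a graded K-linear bijection *)
(* (+)_i S_i(-s_i) -> M, given componentwise by phi i : S_i -> M.        *)
Definition hilbert_dec (M : lmodType R) (GM : grading k M)
    t (L : 'I_t -> seq R) (s : 'I_t -> D) : Prop :=
  (forall i, retract_gens k (L i)) /\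
  exists phi : 'I_t -> R -> M,
  [/\ forall i (c : K) p q, inS (L i) p -> inS (L i) q ->
        phi i (c%:MP * p + q) = c%:MP *: phi i p + phi i q,
      forall i e p, inS (L i) p -> @homR K n k e p -> hom GM (e + s i) (phi i p),
      forall y : M, exists p : 'I_t -> R,
        (forall i, inS (L i) (p i)) /\ y = \sum_(i < t) phi i (p i) &
      forall p : 'I_t -> R, (forall i, inS (L i) (p i)) ->
        \sum_(i < t) phi i (p i) = 0 -> forall i, p i = 0].

Definition dec_depth t (L : 'I_t -> seq R) : enat :=
  emin_fam (fun i => rdim (L i)).

Definition has_stanley (M : lmodType R) (GM : grading k M) : Prop :=
  exists t L x, @stanley_dec M GM t L x.

Definition has_hilbert (M : lmodType R) (GM : grading k M) : Prop :=
  exists t L s, @hilbert_dec M GM t L s.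

Definition Stdepth (M : lmodType R) (GM : grading k M) : enat :=
  emax_of (fun v => exists t L x, @stanley_dec M GM t L x /\ dec_depth L = v).

Definition Hdepth (M : lmodType R) (GM : grading k M) : enat :=
  emax_of (fun v => exists t L s, @hilbert_dec M GM t L s /\ dec_depth L = v).

End Decompositions.

(* Main.v *)
From HB Require Import structures.
Require Import Defs.
From mathcomp Require Import all_boot all_algebra.
From mathcomp Require Import mpoly.
From Stdlib Require Import ClassicalEpsilon.
Set Implicit Arguments.
Unset Strict Implicit.
Unset Printing Implicit Defensive.
Import GRing.Theory.
Local Open Scope ring_scope.

Lemma fchoice (A B : Type) (P : A -> B -> Prop) :
  (forall a, exists b, P a b) -> exists F, forall a, P a (F a).
Proof.
move=> H; exists (fun a => proj1_sig (constructive_indefinite_description _ (H a))).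
by move=> a; case: constructive_indefinite_description.
Qed.

Definition csplit (T : Type) t1 t2 (F1 : 'I_t1 -> T) (F2 : 'I_t2 -> T)
  (i : 'I_(t1 + t2)) : T :=
  match split i with inl a => F1 a | inr b => F2 b end.

Lemma csplit_l (T : Type) t1 t2 (F1 : 'I_t1 -> T) (F2 : 'I_t2 -> T) a :
  csplit F1 F2 (lshift t2 a) = F1 a.
Proof. by rewrite /csplit (unsplitK (inl a : 'I_t1 + 'I_t2)). Qed.

Lemma csplit_r (T : Type) t1 t2 (F1 : 'I_t1 -> T) (F2 : 'I_t2 -> T) b :
  csplit F1 F2 (rshift t1 b) = F2 b.
Proof. by rewrite /csplit (unsplitK (inr b : 'I_t1 + 'I_t2)). Qed.

Lemma ord_split_ind t1 t2 (P : 'I_(t1 + t2) -> Prop) :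
  (forall a, P (lshift t2 a)) -> (forall b, P (rshift t1 b)) -> forall i, P i.
Proof. by move=> Hl Hr i; rewrite -(splitK i); case: (split i). Qed.

Lemma sum_split (V : nmodType) t1 t2 (G : 'I_(t1 + t2) -> V) :
  \sum_(i < t1 + t2) G i = \sum_(a < t1) G (lshift t2 a) + \sum_(b < t2) G (rshift t1 b).
Proof. by rewrite big_split_ord. Qed.

Lemma big_uniq_eq (T : eqType) (V : nmodType) (s1 s2 : seq T) (F : T -> V) :
  uniq s1 -> uniq s2 ->
  (forall x, (x \in s1) != (x \in s2) -> F x = 0) ->
  \sum_(x <- s1) F x = \sum_(x <- s2) F x.
Proof.
move=> u1 u2 H.
have E1 : \sum_(x <- s1 | x \in s2) F x = \sum_(x <- s1) F x.
  rewrite big_mkcond /=; apply: eq_big_seq => x xs1; case: ifP => // /negbT x2.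
  by have := H x; rewrite xs1 (negbTE x2) => ->.
have E2 : \sum_(x <- s2 | x \in s1) F x = \sum_(x <- s2) F x.
  rewrite big_mkcond /=; apply: eq_big_seq => x xs2; case: ifP => // /negbT x1.
  by have := H x; rewrite xs2 (negbTE x1) => ->.
rewrite -E1 -E2 -[LHS]big_filter -[RHS]big_filter.
have P : perm_eq [seq x <- s1 | x \in s2] [seq x <- s2 | x \in s1].
  apply: uniq_perm; rewrite ?filter_uniq //.
  by move=> x; rewrite !mem_filter andbC.
by rewrite (perm_big _ P).
Qed.

Lemma eminA : associative emin.
Proof. by case=> [a|] [b|] [c|] //=; rewrite minnA. Qed.
Lemma eminC : commutative emin.
Proof. by case=> [a|] [b|] //=; rewrite minnC. Qed.
Lemma emin_Inf : left_id Inf emin.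
Proof. by case. Qed.
HB.instance Definition _ := Monoid.isComLaw.Build enat Inf emin eminA eminC emin_Inf.

Lemma emin_fam_split t1 t2 (v : 'I_(t1 + t2) -> nat) :
  emin_fam v = emin (emin_fam (fun i => v (lshift t2 i)))
                    (emin_fam (fun j => v (rshift t1 j))).
Proof. by rewrite /emin_fam big_split_ord. Qed.

Lemma emin_fam_bound t (v : 'I_t -> nat) b : (forall i, (v i <= b)%N) ->
  emin_fam v = Inf \/ exists2 x, emin_fam v = Fin x & (x <= b)%N.
Proof.
move=> H; rewrite /emin_fam.
apply: (big_ind (fun e => e = Inf \/ exists2 x, e = Fin x & (x <= b)%N)).
- by left.
- move=> x y [->|[a -> ha]]; first by rewrite emin_Inf.
  case=> [->|[c -> hc]]; first by right; exists a.
  by right; exists (minn a c) => //; rewrite geq_min ha.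
- by move=> i _; right; exists (v i).
Qed.

Lemma emax_spec (P : enat -> Prop) b : (exists v, P v) ->
  (forall x, P (Fin x) -> (x <= b)%N) ->
  P (emax_of P) /\ forall w, P w -> ele w (emax_of P).
Proof.
move=> [v0 Pv0] Pb; rewrite /emax_of; apply: (epsilon_spec (inhabits Inf) (fun v => P v /\ forall w, P w -> ele w v)).
case: (excluded_middle_informative (P Inf)) => [PI|nPI].
  by exists Inf; split => // w; case: w.
pose Q x := if excluded_middle_informative (P (Fin x)) then true else false.
have QP : forall x, Q x -> P (Fin x).
  by move=> x; rewrite /Q; case: excluded_middle_informative.
have PQ : forall x, P (Fin x) -> Q x.
  by move=> x Px; rewrite /Q; case: excluded_middle_informative.
have exQ : exists x, Q x.
  by case: v0 Pv0 => [x Px|//]; exists x; apply: PQ.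
have ubQ : forall x, Q x -> (x <= b)%N by move=> x /QP /Pb.
case: (ex_maxnP exQ ubQ) => x Qx maxx.
exists (Fin x); split; first exact: QP.
by case=> [y Py|//] /=; apply: maxx; apply: PQ.
Qed.

Lemma emax_comb (PU PN PM : enat -> Prop) b :
  (exists v, PU v) -> (exists v, PN v) ->
  (forall x, PU (Fin x) -> (x <= b)%N) -> (forall x, PN (Fin x) -> (x <= b)%N) ->
  (forall x, PM (Fin x) -> (x <= b)%N) ->
  (forall a c, PU a -> PN c -> PM (emin a c)) ->
  ele (emin (emax_of PU) (emax_of PN)) (emax_of PM).
Proof.
move=> eU eN bU bN bM H.
have [PUm _] := emax_spec eU bU.
have [PNm _] := emax_spec eN bN.
have PMc := H _ _ PUm PNm.
have [_ mM] := emax_spec (ex_intro _ _ PMc) bM.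
exact: mM.
Qed.

Lemma sum_if_eq (T : eqType) (V : nmodType) (r : seq T) (i : T) (v : V) :
  uniq r -> i \in r -> \sum_(e <- r) (if e == i then v else 0) = v.
Proof.
move=> ur ir; rewrite (bigD1_seq i ir ur) /= eqxx big1 ?addr0 //.
by move=> e /negPf ->.
Qed.

Section Main.
Variables (K : fieldType) (n : nat) (k : gkind).
Local Notation R := {mpoly K[n]}.
Local Notation D := (degT n k).

Section Lin.
Variables (M N : lmodType R) (f : M -> N).
Hypothesis fL : forall (a : R) (x y : M), f (a *: x + y) = a *: f x + f y.

Lemma linf0 : f 0 = 0.
Proof. by have := fL (-1) 0 0; rewrite scaler0 add0r scaleN1r addNr. Qed.
Lemma linfD x y : f (x + y) = f x + f y.
Proof. by have := fL 1 x y; rewrite !scale1r. Qed.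
Lemma linfZ a x : f (a *: x) = a *: f x.
Proof. by have := fL a x 0; rewrite !addr0 linf0 addr0. Qed.
Lemma linfN x : f (- x) = - f x.
Proof. by rewrite -scaleN1r linfZ scaleN1r. Qed.
Lemma linf_sum (I : Type) (r : seq I) (P : pred I) (F : I -> M) :
  f (\sum_(i <- r | P i) F i) = \sum_(i <- r | P i) f (F i).
Proof. by apply: (big_morph f linfD linf0). Qed.
End Lin.

Section Hom.
Variables (M : lmodType R) (GM : grading k M).

Lemma hom_sum d (I : Type) (r : seq I) (P : pred I) (F : I -> M) :
  (forall i, P i -> Defs.hom GM d (F i)) -> Defs.hom GM d (\sum_(i <- r | P i) F i).
Proof.
move=> H; apply: (big_ind (Defs.hom GM d)) => //; first exact: hom0.
by move=> x y; apply: homD.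
Qed.

Lemma homN d x : Defs.hom GM d x -> Defs.hom GM d (- x).
Proof.
move=> h; have := homZ (-1) h; by rewrite mpolyCN mpolyC1 scaleN1r.
Qed.

Lemma homB d x y : Defs.hom GM d x -> Defs.hom GM d y -> Defs.hom GM d (x - y).
Proof. by move=> hx hy; apply: homD => //; apply: homN. Qed.

Lemma hom_direct_seq (s : seq D) (F : D -> M) : uniq s ->
  (forall e, e \in s -> Defs.hom GM e (F e)) -> \sum_(e <- s) F e = 0 ->
  forall e, e \in s -> F e = 0.
Proof.
move=> us hF s0 e es.
pose dg (j : 'I_(size s)) := nth 0 s j.
have := @hom_direct _ _ _ _ GM (size s) dg (fun j => F (dg j)).
have dinj : forall a b, dg a = dg b -> a = b.
  move=> a b /eqP; rewrite /dg nth_uniq // => /eqP ab; exact: val_inj.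
have hj : forall j, Defs.hom GM (dg j) (F (dg j)) by move=> j; apply: hF; exact: mem_nth.
have sm : \sum_(j < size s) F (dg j) = 0.
  by rewrite -[RHS]s0 [RHS](big_nth 0) big_mkord.
move=> /(_ dinj hj sm (Ordinal (etrans (index_mem e s) es) : 'I_(size s))).
by rewrite /dg /= nth_index.
Qed.
End Hom.

Lemma hom_lift (M N : lmodType R) (GM : grading k M) (GN : grading k N) (g : M -> N) :
  graded_hom GM GN g -> (forall z, exists y, g y = z) ->
  forall d z, Defs.hom GN d z -> exists y, Defs.hom GM d y /\ g y = z.
Proof.
move=> [gL gH] gS d z hz.
have [y0 y0z] := gS z.
have [t [dg [y [hy ysum]]]] := hom_span GM y0.
pose Y (e : D) := \sum_(j < t | dg j == e) y j.
have hY : forall e, Defs.hom GM e (Y e).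
  by move=> e; apply: hom_sum => j /eqP <-.
exists (Y d); split => //.
pose s := undup (d :: [seq dg j | j <- enum 'I_t]).
pose F (e : D) := g (Y e) - (if e == d then z else 0).
have ds : d \in s by rewrite mem_undup inE eqxx.
have Fs : \sum_(e <- s) F e = 0.
  rewrite /F big_split /= -(linf_sum gL).
  have -> : \sum_(e <- s) Y e = y0.
    rewrite ysum /Y.
    rewrite (exchange_big_dep xpredT) //=.
    apply: eq_bigr => j _.
    rewrite big_mkcond /=.
    under eq_bigr do rewrite eq_sym.
    rewrite sum_if_eq //; first exact: undup_uniq.
    by rewrite mem_undup inE; apply/orP; right; apply: map_f; rewrite mem_enum.
  rewrite y0z sumrN sum_if_eq ?subrr //; exact: undup_uniq.
have := hom_direct_seq (undup_uniq _) _ Fs ds.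
rewrite /F eqxx => H; apply/eqP; rewrite -subr_eq0; apply/eqP; apply: H.
move=> e _; rewrite /F; apply: homB; first exact: gH.
by case: eqP => [->|_]; [exact: hz | exact: hom0].
Qed.

Definition tot (e : D) : nat :=
  (match k as k0 return degT n k0 -> nat with
   | Multi => fun e => (\sum_(j < n) `|e ord0 j|)%N
   | Std => fun e => `|e|%N end) e.

Lemma tot_mdegk m : tot (mdegk k m) = mdeg m.
Proof.
rewrite /tot /mdegk; case: k => /=.
  by rewrite mdegE; apply: eq_bigr => j _; rewrite mxE.
by [].
Qed.

Definition Bd (e : D) := (tot e).+1.

Lemma mdegk_bound m e : mdegk k m = e -> (mdeg m < Bd e)%N.
Proof. by move=> <-; rewrite /Bd tot_mdegk. Qed.

Definition cols (b : nat) : seq 'X_{1..n} := map val (enum {: 'X_{1..n < b}}).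

Lemma cols_uniq b : uniq (cols b).
Proof. by rewrite map_inj_uniq ?enum_uniq //; apply: val_inj. Qed.

Lemma mem_cols b m : (m \in cols b) = (mdeg m < b)%N.
Proof.
apply/mapP/idP => [[x _ ->]|H]; first exact: bmdeg.
by exists (BMultinom H); rewrite ?mem_enum.
Qed.

Definition pi (e : D) (p : R) : R :=
  \sum_(m <- cols (Bd e) | mdegk k m == e) p@_m *: 'X_[m].

Lemma pi_lin e c p q : pi e (c *: p + q) = c *: pi e p + pi e q.
Proof.
rewrite /pi scaler_sumr -big_split /=; apply: eq_bigr => m _.
by rewrite mcoeffD mcoeffZ scalerDl scalerA.
Qed.

Lemma pi0 e : pi e 0 = 0.
Proof. by rewrite /pi big1 // => m _; rewrite mcoeff0 scale0r. Qed.

Lemma pi_coef e p m : (pi e p)@_m = if mdegk k m == e then p@_m else 0.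
Proof.
rewrite /pi raddf_sum /=.
under eq_bigr do rewrite mcoeffZ mcoeffX.
case: eqP => [H|H].
  rewrite -big_filter (bigD1_seq m) /=; first last.
  - by rewrite filter_uniq // cols_uniq.
  - by rewrite mem_filter mem_cols H eqxx mdegk_bound.
  rewrite eqxx mulr1 big1 ?addr0 // => m' /negPf.
  by rewrite eq_sym => ->; rewrite mulr0.
rewrite big1 // => m' /eqP E; case: eqP => [E'|]; last by rewrite mulr0.
by case: H; rewrite -E'.
Qed.

Definition homG (G : zmodType) (dl : 'X_{1..n} -> G) (d : G) (p : R) :=
  forall m, m \in msupp p -> dl m = d.

Lemma homR_homG e p : @homR K n k e p <-> homG (mdegk k) e p.
Proof. by []. Qed.

Lemma pi_hom e p : homG (mdegk k) e (pi e p).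
Proof.
move=> m; rewrite mcoeff_msupp pi_coef; case: (mdegk k m =P e) => [//|_]; by rewrite eqxx.
Qed.

Lemma pi_id e p : homG (mdegk k) e p -> pi e p = p.
Proof.
move=> H; apply/mpolyP => m; rewrite pi_coef; case: eqP => // ne.
case: (boolP (m \in msupp p)) => [/H //|/memN_msupp_eq0 ->//].
Qed.

Lemma pi_other e e' p : homG (mdegk k) e' p -> e' != e -> pi e p = 0.
Proof.
move=> H ne; apply/mpolyP => m; rewrite pi_coef mcoeff0; case: eqP => // E.
case: (boolP (m \in msupp p)) => [/H|/memN_msupp_eq0 ->//].
by rewrite E => E'; rewrite E' eqxx in ne.
Qed.

Definition degs (p : R) : seq D := undup [seq mdegk k m | m <- msupp p].

Lemma pi_notdeg e p : e \notin degs p -> pi e p = 0.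
Proof.
move=> H; apply/mpolyP => m; rewrite pi_coef mcoeff0; case: eqP => // E.
case: (boolP (m \in msupp p)) => [mp|/memN_msupp_eq0 ->//].
by case/negP: H; rewrite mem_undup -E; apply: map_f.
Qed.

Lemma pi_sum p : p = \sum_(e <- degs p) pi e p.
Proof.
apply/mpolyP => m; rewrite raddf_sum /=.
under eq_bigr do rewrite pi_coef.
case: (boolP (m \in msupp p)) => mp.
  under eq_bigr do rewrite eq_sym.
  rewrite sum_if_eq //; first exact: undup_uniq.
  by rewrite mem_undup; apply: map_f.
by rewrite memN_msupp_eq0 // big1 // => e _; case: eqP.
Qed.

Lemma homG_add (G : zmodType) (dl : 'X_{1..n} -> G) d c p q :
  homG dl d p -> homG dl d q -> homG dl d (c *: p + q).
Proof.
move=> hp hq m /msuppD_le; rewrite mem_cat => /orP[/msuppZ_le/hp|/hq] //.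
Qed.

Lemma homG0 (G : zmodType) (dl : 'X_{1..n} -> G) d : homG dl d 0.
Proof. by move=> m; rewrite msupp0. Qed.

Lemma homG_sum (G : zmodType) (dl : 'X_{1..n} -> G) d (I : Type) (r : seq I) (c : I -> K) F :
  (forall i, homG dl d (F i)) -> homG dl d (\sum_(i <- r) c i *: F i).
Proof.
move=> H; apply: (big_ind (homG dl d)); first exact: homG0.
  by move=> x y hx hy; have := homG_add (c:=1) hx hy; rewrite scale1r.
by move=> i _; have := homG_add (c:=c i) (H i) (homG0 dl d); rewrite addr0.
Qed.


Lemma mdegkD (m1 m2 : 'X_{1..n}) : mdegk k (m1 + m2)%MM = mdegk k m1 + mdegk k m2.
Proof.
rewrite /mdegk; case: k => /=.
  by apply/rowP => j; rewrite !mxE mnmDE PoszD.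
by rewrite mdegD PoszD.
Qed.

Lemma mdegk0 : mdegk k (0%MM : 'X_{1..n}) = 0.
Proof.
rewrite /mdegk; case: k => /=.
  by apply/rowP => j; rewrite !mxE mnm0E.
by rewrite mdeg0.
Qed.

Section HomG.
Variables (G : zmodType) (dl : 'X_{1..n} -> G).
Hypotheses (dlD : forall m1 m2, dl (m1 + m2)%MM = dl m1 + dl m2) (dl0 : dl 0%MM = 0).

Lemma homG_mul d1 d2 p q : homG dl d1 p -> homG dl d2 q -> homG dl (d1 + d2) (p * q).
Proof.
move=> hp hq m /msuppM_le /allpairsP [[m1 m2] [/= h1 h2 ->]].
by rewrite dlD (hp _ h1) (hq _ h2).
Qed.

Lemma homG1 : homG dl 0 1.
Proof. by move=> m; rewrite msupp1 inE => /eqP ->. Qed.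

Lemma homG_exp d p j : homG dl d p -> homG dl (d *+ j) (p ^+ j).
Proof.
move=> hp; elim: j => [|j IH]; first by rewrite expr0 mulr0n; exact: homG1.
by rewrite exprS mulrS; apply: homG_mul.
Qed.

Lemma homG_prod r (d : 'I_r -> G) (F : 'I_r -> R) :
  (forall i, homG dl (d i) (F i)) -> homG dl (\sum_i d i) (\prod_i F i).
Proof.
move=> H; apply: (big_rec2 (fun a b => homG dl a b)); first exact: homG1.
by move=> i a b _ hb; apply: homG_mul.
Qed.
End HomG.

Lemma gen_homk (ls : seq R) : retract_gens k ls ->
  forall l, l \in ls -> exists d, homG (mdegk k) d l.
Proof.
rewrite /retract_gens /homG /mdegk; case: k => H l /H.
  by move=> [i ->]; exists (\row_j (U_(i)%MM j)%:Z) => m; rewrite msuppX inE => /eqP ->.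
by move=> Hl; exists 1 => m /Hl ->.
Qed.

Lemma gen_homT (ls : seq R) : retract_gens k ls ->
  forall l, l \in ls -> homG (fun m => (mdeg m)%:Z) 1 l.
Proof.
rewrite /retract_gens /homG; case: k => H l /H.
  by move=> [i ->] m; rewrite msuppX inE => /eqP ->; rewrite mdeg1.
by move=> Hl m /Hl ->.
Qed.

Lemma compX_homk (ls : seq R) (mu : 'X_{1..size ls}) : retract_gens k ls ->
  exists d, homG (mdegk k) d ('X_[mu] \mPo in_tuple ls).
Proof.
move=> H.
have : forall i : 'I_(size ls), exists d, homG (mdegk k) d (tnth (in_tuple ls) i).
  by move=> i; apply: (gen_homk H); apply: mem_tnth.
move=> /fchoice [dd hdd].
exists (\sum_i dd i *+ mu i); rewrite comp_mpolyX.
apply: homG_prod => //; first exact: mdegkD.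
  exact: mdegk0.
by move=> i; apply: homG_exp => //; [exact: mdegkD | exact: mdegk0].
Qed.

Lemma compX_homT (ls : seq R) (mu : 'X_{1..size ls}) : retract_gens k ls ->
  homG (fun m => (mdeg m)%:Z) (mdeg mu)%:Z ('X_[mu] \mPo in_tuple ls).
Proof.
move=> H.
have -> : (mdeg mu)%:Z = \sum_(i < size ls) (1 *+ mu i).
  by rewrite mdegE -natz natr_sum.
rewrite comp_mpolyX; apply: homG_prod.
- by move=> m1 m2; rewrite mdegD PoszD.
- by rewrite mdeg0.
move=> i; apply: homG_exp.
- by move=> m1 m2; rewrite mdegD PoszD.
- by rewrite mdeg0.
by apply: (gen_homT H); apply: mem_tnth.
Qed.

Lemma inS_lin (ls : seq R) c p q : inS ls p -> inS ls q -> inS ls (c *: p + q).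
Proof. by move=> [q1 ->] [q2 ->]; exists (c *: q1 + q2); rewrite comp_mpolyD comp_mpolyZ. Qed.

Lemma inS_0 (ls : seq R) : inS ls 0.
Proof. by exists 0; rewrite comp_mpoly0. Qed.

Lemma inS_sum (ls : seq R) (I : Type) (r : seq I) (c : I -> K) F :
  (forall i, inS ls (F i)) -> inS ls (\sum_(i <- r) c i *: F i).
Proof.
move=> H; apply: (big_ind (inS ls)); first exact: inS_0.
  by move=> x y hx hy; have := inS_lin 1 hx hy; rewrite scale1r.
by move=> i _; have := inS_lin (c i) (H i) (inS_0 ls); rewrite addr0.
Qed.

Definition rr (ls : seq R) (e : D) (mu : 'X_{1..size ls}) : R :=
  pi e ('X_[mu] \mPo in_tuple ls).
Arguments rr : clear implicits.

Lemma rr_inS ls e mu : retract_gens k ls -> inS ls (rr ls e mu).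
Proof.
move=> H; have [d hd] := compX_homk mu H; rewrite /rr.
case: (d =P e) => [E|/eqP ne].
  by rewrite pi_id -?E //; exists 'X_[mu].
by rewrite (pi_other hd ne); exact: inS_0.
Qed.

Lemma rr_hom ls e mu : homG (mdegk k) e (rr ls e mu).
Proof. exact: pi_hom. Qed.

Lemma rr_big ls e mu : retract_gens k ls -> (Bd e <= mdeg mu)%N -> rr ls e mu = 0.
Proof.
move=> H le; apply/mpolyP => m; rewrite /rr pi_coef mcoeff0.
case: (mdegk k m =P e) => // E.
case: (boolP (m \in msupp ('X_[mu] \mPo in_tuple ls))) => [ms|/memN_msupp_eq0 ->//].
have := compX_homT (mu:=mu) H ms => -[] E2.
by have := mdegk_bound E; rewrite E2 ltnNge le.
Qed.

Lemma pi_lin_sum e (I : Type) (r : seq I) (c : I -> K) F :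
  pi e (\sum_(i <- r) c i *: F i) = \sum_(i <- r) c i *: pi e (F i).
Proof.
apply: (big_rec2 (fun a b => pi e b = a)); first exact: pi0.
by move=> i a b _ <-; rewrite pi_lin.
Qed.

Lemma pi_comp ls e (q : {mpoly K[size ls]}) :
  pi e (q \mPo in_tuple ls) = \sum_(mu <- msupp q) q@_mu *: rr ls e mu.
Proof. by rewrite comp_mpolyEX pi_lin_sum. Qed.

Lemma pi_inS ls e p : retract_gens k ls -> inS ls p -> inS ls (pi e p).
Proof. by move=> H [q ->]; rewrite pi_comp; apply: inS_sum => mu; exact: rr_inS. Qed.

Definition rws (ls : seq R) (b : nat) : seq 'X_{1..size ls} :=
  map val (enum {: 'X_{1..(size ls) < b}}).

Lemma rws_uniq ls b : uniq (rws ls b).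
Proof. by rewrite map_inj_uniq ?enum_uniq //; apply: val_inj. Qed.

Lemma mem_rws ls b m : (m \in rws ls b) = (mdeg m < b)%N.
Proof.
apply/mapP/idP => [[x _ ->]|H]; first exact: bmdeg.
by exists (BMultinom H); rewrite ?mem_enum.
Qed.

Section Lift.
Variables (M N : lmodType R) (GM : grading k M) (GN : grading k N) (g : M -> N).
Hypotheses (gG : graded_hom GM GN g) (gS : forall z : N, exists y : M, g y = z).
Variables (ls : seq R) (s : D) (Phi : R -> N).
Hypotheses (rg : retract_gens k ls)
  (PhiL : forall (c : K) p q, inS ls p -> inS ls q -> Phi (c%:MP * p + q) = c%:MP *: Phi p + Phi q)
  (PhiH : forall e p, inS ls p -> @homR K n k e p -> Defs.hom GN (e + s) (Phi p)).

Let gL := proj1 gG.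

Lemma Phi0 : Phi 0 = 0.
Proof.
have := PhiL (-1) (inS_0 ls) (inS_0 ls).
by rewrite mulr0 addr0 mpolyCN mpolyC1 scaleN1r addNr.
Qed.

Lemma PhiZ c p : inS ls p -> Phi (c *: p) = c%:MP *: Phi p.
Proof.
move=> Sp; have := PhiL c Sp (inS_0 ls).
by rewrite addr0 Phi0 addr0 mul_mpolyC.
Qed.

Lemma PhiD p q : inS ls p -> inS ls q -> Phi (p + q) = Phi p + Phi q.
Proof.
move=> Sp Sq; have := PhiL 1 Sp Sq.
by rewrite mpolyC1 mul1r scale1r.
Qed.

Lemma inS_add p q : inS ls p -> inS ls q -> inS ls (p + q).
Proof. by move=> Sp Sq; have := inS_lin 1 Sp Sq; rewrite scale1r. Qed.

Lemma inS_sum1 (I : Type) (r : seq I) (F : I -> R) :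
  (forall i, inS ls (F i)) -> inS ls (\sum_(i <- r) F i).
Proof.
move=> H; apply: (big_ind (inS ls)); [exact: inS_0 | exact: inS_add | by []].
Qed.

Lemma Phi_sum (I : Type) (r : seq I) (F : I -> R) :
  (forall i, inS ls (F i)) -> Phi (\sum_(i <- r) F i) = \sum_(i <- r) Phi (F i).
Proof.
move=> H; elim: r => [|x r IH]; first by rewrite !big_nil Phi0.
by rewrite !big_cons PhiD ?IH //; apply: inS_sum1.
Qed.



Local Notation X0 := (0%MM : 'X_{1..(size ls)}).
Local Notation Y0 := (0%MM : 'X_{1..n}).

Definition vecp (e : D) (r : R) : 'rV[K]_(size (cols (Bd e))) :=
  \row_j r@_(nth Y0 (cols (Bd e)) j).

Definition Amx (e : D) : 'M[K]_(size (rws ls (Bd e)), size (cols (Bd e))) :=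
  \matrix_(i, j) (rr ls e (nth X0 (rws ls (Bd e)) i))@_(nth Y0 (cols (Bd e)) j).

Definition wl (e : D) (mu : 'X_{1..(size ls)}) : M :=
  epsilon (inhabits 0) (fun y => Defs.hom GM (e + s) y /\ g y = Phi (rr ls e mu)).

Lemma wl_spec e mu : Defs.hom GM (e + s) (wl e mu) /\ g (wl e mu) = Phi (rr ls e mu).
Proof.
rewrite /wl; apply: (epsilon_spec (inhabits 0) (fun y => Defs.hom GM (e + s) y /\ g y = Phi (rr ls e mu))).
apply: (hom_lift gG gS); apply: PhiH; [exact: rr_inS | exact: rr_hom].
Qed.

Definition cc (e : D) (r : R) := vecp e r *m pinvmx (Amx e).

Definition psie (e : D) (r : R) : M :=
  \sum_(i < size (rws ls (Bd e))) (cc e r 0 i)%:MP *: wl e (nth X0 (rws ls (Bd e)) i).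

Lemma vecp_lin e c r r' : vecp e (c *: r + r') = c *: vecp e r + vecp e r'.
Proof. by apply/rowP => j; rewrite !mxE mcoeffD mcoeffZ. Qed.

Lemma vecp_inj e r1 r2 : homG (mdegk k) e r1 -> homG (mdegk k) e r2 ->
  vecp e r1 = vecp e r2 -> r1 = r2.
Proof.
move=> h1 h2 V; apply/mpolyP => m.
case: (mdegk k m =P e) => E.
  have mc : m \in cols (Bd e) by rewrite mem_cols mdegk_bound.
  have := congr1 (fun v : 'rV[K]_(size (cols (Bd e))) => v 0 (Ordinal (etrans (index_mem m _) mc))) V.
  by rewrite !mxE /= nth_index.
have z : forall r, homG (mdegk k) e r -> r@_m = 0.
  move=> r hr; case: (boolP (m \in msupp r)) => [/hr //|/memN_msupp_eq0 //].
by rewrite !z.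
Qed.

Lemma vecp_comb e (c : 'rV[K]_(size (rws ls (Bd e)))) :
  vecp e (\sum_(i < size (rws ls (Bd e))) c 0 i *: rr ls e (nth X0 (rws ls (Bd e)) i))
  = c *m Amx e.
Proof.
apply/rowP => j; rewrite !mxE raddf_sum /=; apply: eq_bigr => i _.
by rewrite mcoeffZ !mxE.
Qed.

Lemma vecp_in e r : inS ls r -> homG (mdegk k) e r -> (vecp e r <= Amx e)%MS.
Proof.
move=> [q Eq] hr.
have E : r = \sum_(i < size (rws ls (Bd e))) (\row_i q@_(nth X0 (rws ls (Bd e)) i)) 0 i
                *: rr ls e (nth X0 (rws ls (Bd e)) i).
  rewrite -{1}(pi_id hr) Eq pi_comp.
  under [RHS]eq_bigr do rewrite mxE.
  rewrite -(big_mkord xpredT (fun i => q@_(nth X0 (rws ls (Bd e)) i) *: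
             rr ls e (nth X0 (rws ls (Bd e)) i))).
  rewrite -(big_nth X0 xpredT (fun mu => q@_mu *: rr ls e mu)).
  apply: big_uniq_eq; [exact: msupp_uniq | exact: rws_uniq |] => mu.
  case: (boolP (mu \in msupp q)) => mq /=.
    rewrite mem_rws; case: ltnP => //= le _.
    by rewrite rr_big // scaler0.
  by move=> _; rewrite memN_msupp_eq0 // scale0r.
by rewrite E vecp_comb submxMl.
Qed.

Lemma cc_lin e c r r' i : cc e (c *: r + r') 0 i = c * cc e r 0 i + cc e r' 0 i.
Proof. by rewrite /cc vecp_lin mulmxDl -scalemxAl !mxE. Qed.

Lemma psie_lin e c r r' : psie e (c *: r + r') = c%:MP *: psie e r + psie e r'.
Proof.
rewrite /psie scaler_sumr -big_split /=; apply: eq_bigr => i _.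
by rewrite cc_lin mpolyCD mpolyCM scalerDl scalerA.
Qed.

Lemma psie0 e : psie e 0 = 0.
Proof.
have := psie_lin e (-1) 0 0.
by rewrite scaler0 addr0 mpolyCN mpolyC1 scaleN1r addNr.
Qed.

Lemma psie_hom e r : Defs.hom GM (e + s) (psie e r).
Proof.
apply: hom_sum => i _; apply: homZ; exact: (proj1 (wl_spec e _)).
Qed.

Lemma psie_g e r : inS ls r -> homG (mdegk k) e r -> g (psie e r) = Phi r.
Proof.
move=> Sr hr.
have Hv : vecp e (\sum_(i < size (rws ls (Bd e))) cc e r 0 i *: rr ls e (nth X0 (rws ls (Bd e)) i))
          = vecp e r.
  by rewrite vecp_comb /cc mulmxKpV //; apply: vecp_in.
have Hr : \sum_(i < size (rws ls (Bd e))) cc e r 0 i *: rr ls e (nth X0 (rws ls (Bd e)) i) = r.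
  apply: vecp_inj Hv => //.
  by apply: homG_sum => i; exact: rr_hom.
rewrite /psie (linf_sum gL).
rewrite (eq_bigr (fun i => Phi (cc e r 0 i *: rr ls e (nth X0 (rws ls (Bd e)) i)))); last first.
  by move=> i _; rewrite (linfZ gL) (proj2 (wl_spec e _)) PhiZ //; exact: rr_inS.
rewrite -Phi_sum; first by rewrite Hr.
move=> i; have := inS_lin (cc e r 0 i) (rr_inS e (nth X0 (rws ls (Bd e)) i) rg) (inS_0 ls).
by rewrite addr0.
Qed.

Definition psi (p : R) : M := \sum_(e <- degs p) psie e (pi e p).

Lemma psi_ext p (s0 : seq D) : uniq s0 -> {subset degs p <= s0} ->
  psi p = \sum_(e <- s0) psie e (pi e p).
Proof.
move=> us0 sub; apply: big_uniq_eq => //; first exact: undup_uniq.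
move=> x; case: (boolP (x \in degs p)) => xd.
  by rewrite (sub _ xd).
by move=> _; rewrite pi_notdeg // psie0.
Qed.

Lemma psi_lin (c : K) p q : psi (c%:MP * p + q) = c%:MP *: psi p + psi q.
Proof.
rewrite mul_mpolyC.
pose s0 := undup (degs p ++ degs q ++ degs (c *: p + q)).
have us0 : uniq s0 by exact: undup_uniq.
rewrite !(psi_ext (s0 := s0)) //; last first.
- by move=> x xd; rewrite mem_undup !mem_cat xd ?orbT.
- by move=> x xd; rewrite mem_undup !mem_cat xd ?orbT.
- by move=> x xd; rewrite mem_undup !mem_cat xd ?orbT.
rewrite scaler_sumr -big_split /=; apply: eq_bigr => e _.
by rewrite pi_lin psie_lin.
Qed.

Lemma psi_hom e' p : homG (mdegk k) e' p -> Defs.hom GM (e' + s) (psi p).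
Proof.
move=> hp; rewrite /psi big_seq; apply: hom_sum => e.
rewrite mem_undup => /mapP [m mp ->]; rewrite (hp _ mp).
exact: psie_hom.
Qed.

Lemma psi_g p : inS ls p -> g (psi p) = Phi p.
Proof.
move=> Sp; rewrite /psi (linf_sum gL).
rewrite (eq_bigr (fun e => Phi (pi e p))); last first.
  by move=> e _; apply: psie_g; [apply: pi_inS | apply: pi_hom].
by rewrite -Phi_sum -?pi_sum // => e; apply: pi_inS.
Qed.

Lemma lift_exists : exists psi : R -> M,
   [/\ forall (c : K) p q, inS ls p -> inS ls q -> psi (c%:MP * p + q) = c%:MP *: psi p + psi q,
       forall e p, inS ls p -> @homR K n k e p -> Defs.hom GM (e + s) (psi p) &
       forall p, inS ls p -> g (psi p) = Phi p].
Proof.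
exists psi; split.
- by move=> c p q _ _; apply: psi_lin.
- by move=> e p _ hp; apply: psi_hom.
- exact: psi_g.
Qed.

End Lift.

Section Exact.
Variables (U M N : lmodType R) (GU : grading k U) (GM : grading k M) (GN : grading k N)
  (f : U -> M) (g : M -> N).
Hypotheses (fG : graded_hom GU GM f) (gG : graded_hom GM GN g) (finj : injective f)
  (gS : forall z : N, exists y : M, g y = z)
  (ex : forall y : M, g y = 0 <-> exists u : U, y = f u).

Let fL := proj1 fG.
Let gL := proj1 gG.

Lemma gf0 u : g (f u) = 0.
Proof. by apply/ex; exists u. Qed.

Lemma f_eq0 u : f u = 0 -> u = 0.
Proof. by move=> h; apply: finj; rewrite h (linf0 fL). Qed.

Lemma stanley_comb t1 (L1 : 'I_t1 -> seq R) x1 t2 (L2 : 'I_t2 -> seq R) x2 :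
  stanley_dec GU L1 x1 -> stanley_dec GN L2 x2 ->
  exists x, stanley_dec GM (csplit L1 L2) x.
Proof.
case=> r1 h1 a1 s1 d1 [r2 h2 a2 s2 d2].
have [dg2 hdg2] := fchoice h2.
have : forall b, exists y, Defs.hom GM (dg2 b) y /\ g y = x2 b.
  move=> b; exact: (hom_lift gG gS (hdg2 b)).
move=> /fchoice [y2 hy2].
exists (csplit (fun a => f (x1 a)) y2); split.
- by apply: ord_split_ind => i; rewrite !(csplit_l, csplit_r).
- apply: ord_split_ind => i; rewrite !(csplit_l, csplit_r).
    by case: (h1 i) => d hd; exists d; apply: (proj2 fG).
  by exists (dg2 i); case: (hy2 i).
- apply: ord_split_ind => i p; rewrite !(csplit_l, csplit_r) => Sp.
    by rewrite -(linfZ fL) => /f_eq0; apply: a1.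
  move=> h; apply: (a2 _ _ Sp).
  by have := congr1 g h; rewrite (linfZ gL) (linf0 gL); case: (hy2 i) => _ ->.
- move=> y.
  have [p2 [Sp2 e2]] := s2 (g y).
  have : g (y - \sum_(b < t2) p2 b *: y2 b) = 0.
    rewrite (linfD gL) (linfN gL) (linf_sum gL) e2 -sumrB big1 // => b _.
    by rewrite (linfZ gL); case: (hy2 b) => _ ->; rewrite subrr.
  move=> /ex [u eu].
  have [p1 [Sp1 e1]] := s1 u.
  exists (csplit p1 p2); split.
    by apply: ord_split_ind => i; rewrite !(csplit_l, csplit_r).
  rewrite sum_split.
  under eq_bigr do rewrite !(csplit_l, csplit_r).
  under [X in _ + X]eq_bigr do rewrite !(csplit_l, csplit_r).
  rewrite -(subrK (\sum_(b < t2) p2 b *: y2 b) y) eu e1 (linf_sum fL).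
  by congr (_ + _); apply: eq_bigr => a _; rewrite (linfZ fL).
- move=> p Sp.
  rewrite sum_split.
  under eq_bigr do rewrite !(csplit_l, csplit_r).
  under [X in _ + X]eq_bigr do rewrite !(csplit_l, csplit_r).
  move=> h.
  have hh2 : \sum_(b < t2) p (rshift t1 b) *: x2 b = 0.
    have := congr1 g h; rewrite (linfD gL) !(linf_sum gL) (linf0 gL) big1 ?add0r.
      by move=> E; rewrite -[RHS]E; apply: eq_bigr => b _; rewrite (linfZ gL); case: (hy2 b) => _ ->.
    by move=> a _; rewrite (linfZ gL) gf0 scaler0.
  have p2z : forall b, p (rshift t1 b) = 0.
    move=> b; apply: (a2 b); first by move: (Sp (rshift t1 b)); rewrite csplit_r => HH.
    by apply: (d2 (fun b => p (rshift t1 b))) => // b'; move: (Sp (rshift t1 b')); rewrite csplit_r => HH.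
  have hh1 : \sum_(a < t1) p (lshift t2 a) *: x1 a = 0.
    apply: f_eq0; rewrite (linf_sum fL); move: h.
    rewrite [X in _ + X]big1 ?addr0; last by move=> b _; rewrite p2z scale0r.
    by move=> E; rewrite -[RHS]E; apply: eq_bigr => a _; rewrite (linfZ fL).
  apply: ord_split_ind => i; rewrite !(csplit_l, csplit_r).
    rewrite -(linfZ fL) (d1 (fun a => p (lshift t2 a))) ?(linf0 fL) //.
    by move=> a; move: (Sp (lshift t2 a)); rewrite csplit_l => HH.
  by rewrite p2z scale0r.
Qed.

Lemma inS0 (ls : seq R) : inS ls 0.
Proof. by exists 0; rewrite comp_mpoly0. Qed.

Lemma lin0 (V : lmodType R) (ls : seq R) (F : R -> V) :
  (forall (c : K) p q, inS ls p -> inS ls q -> F (c%:MP * p + q) = c%:MP *: F p + F q) ->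
  F 0 = 0.
Proof.
move=> H; have := H (-1) 0 0 (inS0 ls) (inS0 ls).
by rewrite mulr0 addr0 mpolyCN mpolyC1 scaleN1r addNr.
Qed.

Lemma hilb_lift (ls : seq R) (s : D) (Phi : R -> N) :
  retract_gens k ls ->
  (forall (c : K) p q, inS ls p -> inS ls q -> Phi (c%:MP * p + q) = c%:MP *: Phi p + Phi q) ->
  (forall e p, inS ls p -> @homR K n k e p -> Defs.hom GN (e + s) (Phi p)) ->
  exists psi : R -> M,
   [/\ forall (c : K) p q, inS ls p -> inS ls q -> psi (c%:MP * p + q) = c%:MP *: psi p + psi q,
       forall e p, inS ls p -> @homR K n k e p -> Defs.hom GM (e + s) (psi p) &
       forall p, inS ls p -> g (psi p) = Phi p].
Proof. by move=> rg PL PH; exact: (lift_exists gG gS rg PL PH). Qed.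

Lemma hilbert_comb t1 (L1 : 'I_t1 -> seq R) s1 t2 (L2 : 'I_t2 -> seq R) s2 :
  hilbert_dec GU L1 s1 -> hilbert_dec GN L2 s2 ->
  exists s, hilbert_dec GM (csplit L1 L2) s.
Proof.
case=> r1 [phi1 [l1 h1 sp1 in1]] [r2 [phi2 [l2 h2 sp2 in2]]].
have := fun b => hilb_lift (r2 b) (l2 b) (h2 b).
move=> /fchoice [psi Hpsi].
exists (csplit s1 s2); split.
  by apply: ord_split_ind => i; rewrite !(csplit_l, csplit_r).
exists (csplit (fun a p => f (phi1 a p)) psi); split.
- apply: ord_split_ind => i c p q; rewrite !(csplit_l, csplit_r) => Sp Sq.
    by rewrite l1 // (linfD fL) (linfZ fL).
  by case: (Hpsi i) => H _ _; apply: H.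
- apply: ord_split_ind => i e p; rewrite !(csplit_l, csplit_r) => Sp hp.
    by apply: (proj2 fG); apply: h1.
  by case: (Hpsi i) => _ H _; apply: H.
- move=> y.
  have [p2 [Sp2 e2]] := sp2 (g y).
  have : g (y - \sum_(b < t2) psi b (p2 b)) = 0.
    rewrite (linfD gL) (linfN gL) (linf_sum gL) e2 -sumrB big1 // => b _.
    by case: (Hpsi b) => _ _ ->; rewrite ?subrr.
  move=> /ex [u eu].
  have [p1 [Sp1 e1]] := sp1 u.
  exists (csplit p1 p2); split.
    by apply: ord_split_ind => i; rewrite !(csplit_l, csplit_r).
  rewrite sum_split.
  under eq_bigr do rewrite !(csplit_l, csplit_r).
  under [X in _ + X]eq_bigr do rewrite !(csplit_l, csplit_r).
  by rewrite -(subrK (\sum_(b < t2) psi b (p2 b)) y) eu e1 (linf_sum fL).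
- move=> p Sp.
  rewrite sum_split.
  under eq_bigr do rewrite !(csplit_l, csplit_r).
  under [X in _ + X]eq_bigr do rewrite !(csplit_l, csplit_r).
  move=> h.
  have Sp1 : forall a, inS (L1 a) (p (lshift t2 a)).
    by move=> a; move: (Sp (lshift t2 a)); rewrite csplit_l => HH.
  have Sp2 : forall b, inS (L2 b) (p (rshift t1 b)).
    by move=> b; move: (Sp (rshift t1 b)); rewrite csplit_r => HH.
  have hh2 : \sum_(b < t2) phi2 b (p (rshift t1 b)) = 0.
    have := congr1 g h; rewrite (linfD gL) !(linf_sum gL) (linf0 gL) big1 ?add0r.
      move=> E; rewrite -[RHS]E; apply: eq_bigr => b _.
      by case: (Hpsi b) => _ _ ->.
    by move=> a _; rewrite gf0.
  have p2z : forall b, p (rshift t1 b) = 0.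
    exact: (in2 (fun b => p (rshift t1 b))).
  have hh1 : \sum_(a < t1) phi1 a (p (lshift t2 a)) = 0.
    apply: f_eq0; rewrite (linf_sum fL); move: h.
    rewrite [X in _ + X]big1 ?addr0 //.
    move=> b _; rewrite p2z; case: (Hpsi b) => H _ _; exact: (lin0 H).
  apply: ord_split_ind => i //.
  exact: (in1 (fun a => p (lshift t2 a))).
Qed.

Lemma dec_depth_csplit t1 t2 (L1 : 'I_t1 -> seq R) (L2 : 'I_t2 -> seq R) :
  dec_depth (csplit L1 L2) = emin (dec_depth L1) (dec_depth L2).
Proof.
rewrite /dec_depth emin_fam_split; congr emin; rewrite /emin_fam; apply: eq_bigr => i _.
  by rewrite csplit_l.
by rewrite csplit_r.
Qed.

Lemma dec_depth_bound t (L : 'I_t -> seq R) x : dec_depth L = Fin x -> (x <= n)%N.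
Proof.
rewrite /dec_depth => E.
have H := @emin_fam_bound t (fun i => rdim (L i)) n (fun i => rank_leq_col _).
by rewrite /emin_fam in H E; rewrite E in H; case: H => [//|[y [->] hy]].
Qed.

End Exact.
End Main.

Theorem proposition2p6 (K : fieldType) (n : nat) (k : gkind)
    (U M N : lmodType {mpoly K[n]})
    (GU : grading k U) (GM : grading k M) (GN : grading k N)
    (f : U -> M) (g : M -> N) :
  fingen U -> fingen M -> fingen N ->
  graded_hom GU GM f -> graded_hom GM GN g ->
  injective f ->
  (forall z : N, exists y : M, g y = z) ->
  (forall y : M, g y = 0 <-> exists u : U, y = f u) ->
  ((has_stanley GU -> has_stanley GN ->
      has_stanley GM /\ ele (emin (Stdepth GU) (Stdepth GN)) (Stdepth GM)) /\
   (has_hilbert GU -> has_hilbert GN ->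
      has_hilbert GM /\ ele (emin (Hdepth GU) (Hdepth GN)) (Hdepth GM))).
Proof.
move=> _ _ _ fG gG finj gS ex; split.
- move=> [t1 [L1 [x1 H1]]] [t2 [L2 [x2 H2]]]; split.
    have [x Hx] := stanley_comb fG gG finj gS ex H1 H2.
    by exists (t1 + t2), (csplit L1 L2), x.
  rewrite /Stdepth; apply: (@emax_comb _ _ _ n).
  + by exists (dec_depth L1); exists t1, L1, x1.
  + by exists (dec_depth L2); exists t2, L2, x2.
  + by move=> x [t [L [y [_ E]]]]; exact: dec_depth_bound E.
  + by move=> x [t [L [y [_ E]]]]; exact: dec_depth_bound E.
  + by move=> x [t [L [y [_ E]]]]; exact: dec_depth_bound E.
  + move=> a c [ta [La [xa [Ha <-]]]] [tc [Lc [xc [Hc <-]]]].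
    have [x Hx] := stanley_comb fG gG finj gS ex Ha Hc.
    exists (ta + tc), (csplit La Lc), x; split => //; exact: dec_depth_csplit.
- move=> [t1 [L1 [x1 H1]]] [t2 [L2 [x2 H2]]]; split.
    have [x Hx] := hilbert_comb fG gG finj gS ex H1 H2.
    by exists (t1 + t2), (csplit L1 L2), x.
  rewrite /Hdepth; apply: (@emax_comb _ _ _ n).
  + by exists (dec_depth L1); exists t1, L1, x1.
  + by exists (dec_depth L2); exists t2, L2, x2.
  + by move=> x [t [L [y [_ E]]]]; exact: dec_depth_bound E.
  + by move=> x [t [L [y [_ E]]]]; exact: dec_depth_bound E.
  + by move=> x [t [L [y [_ E]]]]; exact: dec_depth_bound E.
  + move=> a c [ta [La [xa [Ha <-]]]] [tc [Lc [xc [Hc <-]]]].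
    have [x Hx] := hilbert_comb fG gG finj gS ex Ha Hc.
    exists (ta + tc), (csplit La Lc), x; split => //; exact: dec_depth_csplit.
Qed.
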